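(* In the model described in the context, if correct readers sign their read requests and $\tau\ge 2f+1$, then Algorithm 1 with threshold $t=1$ satisfies both completeness and weak accuracy.
   Context: Model. An asynchronous system has client processes (writers, readers, auditors) and $n$ storage objects $o_1,\dots,o_n$. Each $o_k$ is a linearisable loggable read/write register with a log $L_k$ (initially empty). Its rw-write($b$) stores a block; rw-read() returns the current block and appends $\langle p_r,\mathit{label}(b)\rangle$ to $L_k$, where $p_r$ is the reader and $\mathit{label}(b)$ identifies the value from which $b$ was derived; rw-getLog() returns $L_k$. A multi-writer multi-reader register over values $\mathbb{V}$ is emulated by information dispersal. An a-write($v$) encodes $v$ into $b_{v_1},\dots,b_{v_n}$ with $b_{v_k}$ sent to $o_k$. Any $\tau$ distinct blocks of $v$ recover $v$, and fewer do not. Reads are fast, and concurrency is unlimited. Faults. Writers and auditors can only crash. Faulty readers may crash or contact a subset of objects. At most $f$ objects are faulty; a faulty object may crash, omit its block, omit log records from auditors, and report records of nonexistent reads. Signed reads: correct readers unforgeably sign their read requests, and a record counts only if accompanied by a valid signed request of the named reader. Hence a faulty object cannot create a correct record about a reader from which it never received a signed request. Providing set $P_{p_r,v}$: the set of objects that received a write of $b_{v_k}$ and responded $b_{v_k}$ to a read of $p_r$. The value $v$ is effectively read by $p_r$ iff $|P_{p_r,v}|\ge\tau$. Algorithm 1 (a-audit with threshold $t$): 1. Invoke rw-getLog on all $n$ objects in parallel, and wait for responses from at least $n-f$; let $L[k]$ be the log received from $o_k$. 2. For every record $\langle p_r,\mathit{label}(v)\rangle$ in some $L[k]$, let $\mathcal{E}_{p_r,v}=\{k:\langle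 p_r,\mathit{label}(v)\rangle\in L[k]\}$, and add it to $E_A$ iff $|\mathcal{E}_{p_r,v}|\ge t$. 3. Return $E_A$. Completeness: $|P_{p_r,v}|\ge\tau$ before the audit implies $\mathcal{E}_{p_r,v}\in E_A$. Weak accuracy: for every correct reader $p_r$ that never invoked an a-read before the audit, $\mathcal{E}_{p_r,v}\notin E_A$ for all $v$. *)

(* Defs.v *)
(* Abstract execution model for the auditable register of
   the paper: objects o_1..o_n are 'I_n, value labels live in V, readers in
   Reader.  An execution (up to the return of the audit) is given as
   [pre ++ dur]: [pre] is the sequence of (linearised) events before the audit
   is invoked, [dur] the events between the audit invocation and its
   response. *)
From mathcomp Require Import all_boot.
Set Implicit Arguments. Unset Strict Implicit. Unset Printing Implicit Defensive.

Inductive event (n : nat) (Reader V : Type) : Type :=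
(* reader p invokes an a-read *)
| InvRead of Reader
(* object o_k applies an rw-write of the block b_{v_k} of value v *)
| Write of 'I_n & V
(* object o_k receives a (signed) rw-read request of reader p and answers r:
   None = no answer (omission/crash), Some l = answers a block with label l
   (l = None is the initial empty block / a block derived from no value) *)
| Read of 'I_n & Reader & option (option V)
(* the auditor receives log L as the answer of o_k to its rw-getLog *)
| GetLog of 'I_n & seq (Reader * option V).

Arguments InvRead {n Reader V}.
Arguments Write {n Reader V}.
Arguments Read {n Reader V}.
Arguments GetLog {n Reader V}.

Section Model.
Variables (n : nat) (Reader V : eqType).
Local Notation ev := (event n Reader V).
Local Notation rec := (Reader * option V)%type.

Definition curblock (k : 'I_n) (s : seq ev) : option V :=
  foldl (fun b e => if e is Write k' v then (if k' == k then Some v else b) else b)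
        None s.

Definition read_record (k : 'I_n) (e : ev) : option rec :=
  if e is Read k' p (Some l) then (if k' == k then Some (p, l) else None) else None.

Definition log_of (k : 'I_n) (s : seq ev) : seq rec := pmap (read_record k) s.

Definition is_inv (p : Reader) (e : ev) : bool :=
  if e is InvRead p' then p' == p else false.
Definition is_read_req (k : 'I_n) (p : Reader) (e : ev) : bool :=
  if e is Read k' p' _ then (k' == k) && (p' == p) else false.
Definition write_of (k : 'I_n) (v : V) (e : ev) : bool :=
  if e is Write k' v' then (k' == k) && (v' == v) else false.
Definition resp_of (k : 'I_n) (p : Reader) (v : V) (e : ev) : bool :=
  if e is Read k' p' (Some (Some v')) then [&& k' == k, p' == p & v' == v]
  else false.
Definition is_getlog (e : ev) : bool := if e is GetLog _ _ then true else false.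
Definition getlog_at (k : 'I_n) (e : ev) : option (seq rec) :=
  if e is GetLog k' L then (if k' == k then Some L else None) else None.
Definition is_getlog_of (k : 'I_n) (e : ev) : bool := getlog_at k e != None.

(* correct (non-faulty) objects are linearisable loggable rw-registers *)
Definition correct_objects (F : {set 'I_n}) (pre dur : seq ev) : Prop :=
  forall k, k \notin F ->
    (forall s1 s2 p r, pre ++ dur = s1 ++ Read k p r :: s2 ->
        r = Some (curblock k s1)) /\
    (forall s1 s2 L, pre ++ dur = s1 ++ GetLog k L :: s2 -> L = log_of k s1).

Definition signed_reads (F : {set 'I_n}) (correctR : pred Reader)
    (pre dur : seq ev) : Prop :=
  forall k, k \in F -> forall s1 s2 L p l,
    pre ++ dur = s1 ++ GetLog k L :: s2 -> correctR p -> (p, l) \in L ->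
    has (is_read_req k p) s1.

Definition correct_readers (correctR : pred Reader) (pre dur : seq ev) : Prop :=
  forall s1 s2 k p r, pre ++ dur = s1 ++ Read k p r :: s2 -> correctR p ->
    has (is_inv p) s1.

Definition audit_structure (pre dur : seq ev) : Prop :=
  ~~ has is_getlog pre /\ forall k, count (is_getlog_of k) dur <= 1.

(* L[k] : None if o_k did not answer the audit *)
Definition logs (dur : seq ev) : 'I_n -> option (seq rec) :=
  fun k => ohead (pmap (getlog_at k) dur).

Definition responders (dur : seq ev) : {set 'I_n} :=
  [set k | logs dur k != None].

Definition evid (L : 'I_n -> option (seq rec)) (r : rec) : {set 'I_n} :=
  [set k | r \in odflt [::] (L k)].

Definition audit (t : nat) (L : 'I_n -> option (seq rec)) : seq (rec * {set 'I_n}) :=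
  undup [seq (r, evid L r) | r <- flatten [seq odflt [::] (L k) | k <- enum 'I_n]
                           & t <= #|evid L r|].

Definition providing (pre : seq ev) (p : Reader) (v : V) : {set 'I_n} :=
  [set k : 'I_n | has (write_of k v) pre && has (resp_of k p v) pre].

Definition completeness (t tau : nat) (pre dur : seq ev) : Prop :=
  forall p v, tau <= #|providing pre p v| ->
    ((p, Some v), evid (logs dur) (p, Some v)) \in audit t (logs dur).

Definition weak_accuracy (t : nat) (correctR : pred Reader) (pre dur : seq ev) : Prop :=
  forall p, correctR p -> ~~ has (is_inv p) (pre ++ dur) ->
    forall l, ((p, l), evid (logs dur) (p, l)) \notin audit t (logs dur).

End Model.

(* Main.v *)
Require Import Defs.
From mathcomp Require Import all_boot.
From mathcomp Require Import zify.
Set Implicit Arguments. Unset Strict Implicit. Unset Printing Implicit Defensive.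

Lemma has_split (T : Type) (a : pred T) s :
  has a s -> exists s1 x s2, s = s1 ++ x :: s2 /\ a x.
Proof.
elim: s => [//|x s IH] /=; case ax: (a x) => /=.
  by move=> _; exists [::], x, s.
by move=> /IH [s1 [y [s2 [-> ay]]]]; exists (x :: s1), y, s2.
Qed.

Lemma pmap_in (T : Type) (U : eqType) (g : T -> option U) s y :
  y \in pmap g s -> exists s1 x s2, s = s1 ++ x :: s2 /\ g x = Some y.
Proof.
elim: s => [//|x s IH] /=; case E: (g x) => [z|] /=.
  rewrite inE; case/orP => [/eqP ->|/IH [s1 [x' [s2 [-> h]]]]].
    by exists [::], x, s.
  by exists (x :: s1), x', s2.
by move=> /IH [s1 [x' [s2 [-> h]]]]; exists (x :: s1), x', s2.
Qed.

Lemma pmap_cat_in (T : Type) (U : eqType) (g : T -> option U) s1 x s2 y :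
  g x = Some y -> y \in pmap g (s1 ++ x :: s2).
Proof. by move=> E; rewrite pmap_cat /= E mem_cat inE eqxx orbT. Qed.

Section H.
Variables (n : nat) (Reader V : eqType).
Local Notation ev := (event n Reader V).

Lemma logs_split (dur : seq ev) k L :
  logs dur k = Some L -> exists d1 d2, dur = d1 ++ GetLog k L :: d2.
Proof.
rewrite /logs; elim: dur => [//|e s IH] /=.
case E: (getlog_at k e) => [L'|] /=.
- move=> [<-]; exists [::], s; move: E; case: e => //= k' L0.
  by case: eqP => // -> [->].
- move=> /IH [d1 [d2 ->]]; by exists (e :: d1), d2.
Qed.

Lemma rr_req k p l (e : ev) : read_record k e = Some (p, l) -> is_read_req k p e.
Proof.
case: e => //= k' p' [r|//]; case: (k' =P k) => // _; case=> -> _; by rewrite !eqxx.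
Qed.

Lemma resp_read k p v (e : ev) : resp_of k p v e -> e = Read k p (Some (Some v)).
Proof.
case: e => //= k' p' [[v'|]|] //; by case/and3P => /eqP-> /eqP-> /eqP->.
Qed.
End H.

Theorem theorem4 (n f tau : nat) (Reader V : eqType)
  (F : {set 'I_n}) (correctR : pred Reader)
  (pre dur : seq (event n Reader V)) :
  #|F| <= f ->
  2 * f + 1 <= tau ->
  correct_objects F pre dur ->
  correct_readers correctR pre dur ->
  signed_reads F correctR pre dur ->
  audit_structure pre dur ->
  n - f <= #|responders dur| ->
  completeness 1 tau pre dur /\ weak_accuracy 1 correctR pre dur.
Proof.
move=> hF htau hco hcr hsr _ hR; split.
- move=> p v hP.
  set P := providing pre p v in hP; set R := responders dur in hR *.
  have : ~~ ((P :&: R) \subset F).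
    apply/negP => /subset_leq_card hs.
    have h1 := cardsUI P R.
    have h2 : #|P :|: R| <= n by rewrite -[X in _ <= X](card_ord n) max_card.
    have h3 : #|P| <= n by rewrite -[X in _ <= X](card_ord n) max_card.
    lia.
  case/subsetPn => k; rewrite inE => /andP [kP kR] kF.
  move: kR; rewrite inE; case E: (logs dur k) => [L|//] _.
  have [d1 [d2 Ed]] := logs_split E.
  have [_ hg] := hco k kF.
  have EL := hg (pre ++ d1) d2 L ltac:(by rewrite Ed catA).
  move: kP; rewrite inE => /andP [_ hh].
  have [a [e [b [Epre /resp_read Ee]]]] := has_split hh.
  have inL : (p, Some v) \in L.
    rewrite EL /log_of Epre -catA cat_cons; apply: pmap_cat_in.
    by rewrite Ee /= eqxx.
  have kev : k \in evid (logs dur) (p, Some v) by rewrite inE E.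
  rewrite /audit mem_undup; apply/mapP; exists (p, Some v) => //.
  rewrite mem_filter; apply/andP; split.
    by rewrite card_gt0; apply/set0Pn; exists k.
  apply/flattenP; exists (odflt [::] (logs dur k)); last by rewrite E.
  by apply/mapP; exists k; rewrite ?mem_enum.
- move=> p cp hinv l; apply/negP.
  rewrite /audit mem_undup => /mapP [r]; rewrite mem_filter => /andP [h1 _] [er _].
  subst r; move: h1; rewrite card_gt0 => /set0Pn [k]; rewrite inE.
  case E: (logs dur k) => [L|//] /= inL.
  have [d1 [d2 Ed]] := logs_split E.
  have Es : pre ++ dur = (pre ++ d1) ++ GetLog k L :: d2 by rewrite Ed catA.
  have hreq : has (is_read_req k p) (pre ++ d1).
    case: (boolP (k \in F)) => kF.
      exact: (hsr k kF _ _ _ p l Es cp inL).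
    have [_ hg] := hco k kF.
    move: inL; rewrite (hg _ _ _ Es) /log_of => /pmap_in [a [e [b [-> ee]]]].
    by rewrite has_cat /= (rr_req ee) orbT.
  have [a [e [b [Eab he]]]] := has_split hreq.
  case: e Eab he => //= k' p' r Eab /andP [/eqP ek /eqP ep]; subst k' p'.
  rewrite Eab in Es.
  have := hcr a (b ++ GetLog k L :: d2) k p r ltac:(by rewrite Es -catA) cp.
  by move=> hh; move: hinv; rewrite Es !has_cat hh.
Qed.
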